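(* Let $(X,\|\cdot\|)$ be a strictly convex two-dimensional real normed space with closed unit ball $B_X$ and unit sphere $S_X$. For every $z\in\operatorname{int}(B_X)\setminus\{0\}$ there exists exactly one unordered pair $\{x,x'\}\subset S_X$ such that $z=\tfrac12(x+x')$.
   Context: A norm is strictly convex if the unit sphere contains no nondegenerate line segment. *)

(* Defs.v *)
(* A two-dimensional real normed space is modelled as
   R^2 = 'rV[R]_2 (R : realType) equipped with an arbitrary norm N. *)
From HB Require Import structures.
From mathcomp Require Import all_boot all_order all_algebra.
From mathcomp Require Import reals.
Set Implicit Arguments. Unset Strict Implicit. Unset Printing Implicit Defensive.
Import Order.TTheory GRing.Theory Num.Theory.
Local Open Scope ring_scope.

Definition is_norm (R : realType) (N : 'rV[R]_2 -> R) : Prop :=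
  [/\ (forall x, N x = 0 -> x = 0),
      (forall (a : R) x, N (a *: x) = `|a| * N x) &
      (forall x y, N (x + y) <= N x + N y)].

Definition strictly_convex (R : realType) (N : 'rV[R]_2 -> R) : Prop :=
  forall x y, N x = 1 -> N y = 1 -> x != y ->
    ~ (forall t : R, 0 <= t <= 1 -> N ((1 - t) *: x + t *: y) = 1).

Definition in_int_ball (R : realType) (N : 'rV[R]_2 -> R) (z : 'rV[R]_2) : Prop :=
  exists2 e : R, 0 < e & forall y, N (y - z) < e -> N y <= 1.

(* Main.v *)
Require Import Defs.
From HB Require Import structures.
From mathcomp Require Import all_boot all_order all_algebra.
From mathcomp Require Import reals.
From mathcomp Require Import all_classical all_reals all_analysis.
From mathcomp Require Import ring lra.
Import Order.TTheory GRing.Theory Num.Theory.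
Import numFieldNormedType.Exports.
Local Open Scope ring_scope.

Section Alg.
Variable R : realType.
Variable N : 'rV[R]_2 -> R.
Hypothesis hN : is_norm N.
Hypothesis hS : strictly_convex N.

Lemma rowV2 (u v : 'rV[R]_2) : u 0 0 = v 0 0 -> u 0 1 = v 0 1 -> u = v.
Proof.
move=> h0 h1; apply/rowP => i; case: i => [[|[|k]] Hi].
- by have -> : Ordinal Hi = 0 by apply: val_inj.
- by have -> : Ordinal Hi = 1 by apply: val_inj.
- by [].
Qed.

Lemma NZ a x : N (a *: x) = `|a| * N x.
Proof. by case: hN. Qed.
Lemma Ntri x y : N (x + y) <= N x + N y.
Proof. by case: hN. Qed.
Lemma N0 : N 0 = 0.
Proof. by rewrite -(scale0r (0 : 'rV[R]_2)) NZ normr0 mul0r. Qed.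
Lemma NN x : N (- x) = N x.
Proof. by rewrite -scaleN1r NZ normrN normr1 mul1r. Qed.
Lemma Nge0 x : 0 <= N x.
Proof.
have := Ntri x (- x); rewrite subrr N0 NN => h.
lra.
Qed.
Lemma Neq0 x : N x = 0 -> x = 0.
Proof. by case: hN => h _ _; apply: h. Qed.

Lemma Nconv l p r : 0 <= l <= 1 ->
  N (l *: p + (1 - l) *: r) <= l * N p + (1 - l) * N r.
Proof.
case/andP=> l0 l1; apply: le_trans (Ntri _ _) _.
by rewrite !NZ !ger0_norm // subr_ge0.
Qed.

Lemma L0 l p r : N p <= 1 -> N r < 1 -> 0 <= l < 1 ->
  N (l *: p + (1 - l) *: r) < 1.
Proof.
move=> hp hr /andP[l0 l1].
apply: le_lt_trans (Nconv l p r _) _; first by rewrite l0 ltW.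
have := Nge0 r; have := Nge0 p; nra.
Qed.

Lemma L1 m q r : N q = 1 -> N r = 1 -> q != r -> 0 < m < 1 ->
  N ((1 - m) *: q + m *: r) < 1.
Proof.
move=> hq hr qr /andP[m0 m1].
rewrite ltNge; apply/negP => hm.
have hm1 : N ((1 - m) *: q + m *: r) = 1.
  apply/eqP; rewrite eq_le hm andbT.
  have := Nconv (1 - m) q r; rewrite (_ : 1 - (1 - m) = m); last by ring.
  rewrite hq hr.
  move=> /(_ _) h; apply: le_trans (h _) _; [lra | lra].
apply: (hS q r hq hr qr) => t /andP[t0 t1].
apply/eqP; rewrite eq_le.
have -> : N ((1 - t) *: q + t *: r) <= 1.
  have := Nconv (1 - t) q r; rewrite (_ : 1 - (1 - t) = t); last by ring.
  rewrite hq hr => h; apply: le_trans (h _) _; lra.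
have [tm|mt] := lerP t m.
-
  set a := (1 - m) / (1 - t).
  have ha0 : 0 < a by rewrite /a divr_gt0 //; lra.
  have ha1 : a <= 1 by rewrite /a ler_pdivrMr; lra.
  have E : (1 - m) *: q + m *: r = a *: ((1 - t) *: q + t *: r) + (1 - a) *: r.
    apply: rowV2; rewrite !mxE /a; field; lra.
  have := Nconv a ((1 - t) *: q + t *: r) r (_ : 0 <= a <= 1).
  rewrite -E hm1 hr => /(_ _) h.
  have {}h := h (ltac:(lra)).
  rewrite /=; nra.
- set a := m / t.
  have ha0 : 0 < a by rewrite /a divr_gt0 //; lra.
  have ha1 : a <= 1 by rewrite /a ler_pdivrMr; lra.
  have E : (1 - m) *: q + m *: r = a *: ((1 - t) *: q + t *: r) + (1 - a) *: q.
    apply: rowV2; rewrite !mxE /a; field; lra.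
  have := Nconv a ((1 - t) *: q + t *: r) q (_ : 0 <= a <= 1).
  rewrite -E hm1 hq => /(_ _) h.
  have {}h := h (ltac:(lra)).
  rewrite /=; nra.
Qed.


Lemma eq_ler {a : R} : a = 1 -> a <= 1.
Proof. by move=> ->. Qed.

Ltac vec := apply: rowV2; rewrite !mxE; field; try lra.

Definition det2 (u d : 'rV[R]_2) := u 0 0 * d 0 1 - u 0 1 * d 0 0.

Lemma d0E (d : 'rV[R]_2) : d 0 0 = 0 -> d 0 1 = 0 -> d = 0.
Proof. by move=> h0 h1; apply: rowV2; rewrite !mxE. Qed.

Lemma ker v d : d != 0 -> det2 v d = 0 -> exists k, v = k *: d.
Proof.
rewrite /det2 => dn0 h.
have [d00|d00] := eqVneq (d 0 0) 0.
  have d01 : d 0 1 != 0.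
    by apply/eqP => d01; move: dn0; rewrite (d0E d d00 d01) eqxx.
  exists (v 0 1 / d 0 1); apply: rowV2; rewrite !mxE.
    rewrite d00 mulr0; move: h; rewrite d00 mulr0 subr0 => /eqP.
    by rewrite mulf_eq0 (negbTE d01) orbF => /eqP.
  by field.
exists (v 0 0 / d 0 0); apply: rowV2; rewrite !mxE.
  by field.
have e : v 0 1 * d 0 0 = v 0 0 * d 0 1 by lra.
have -> : v 0 1 = (v 0 1 * d 0 0) / d 0 0 by field.
by rewrite e; field.
Qed.

Lemma neqc (q r d : 'rV[R]_2) (c : R) : d != 0 -> c != 0 -> q - r = c *: d -> q != r.
Proof.
move=> dn0 cn0 E; apply/eqP => qr; move: E; rewrite qr subrr => /esym/eqP.
by rewrite scaler_eq0 (negbTE cn0) (negbTE dn0).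
Qed.

Lemma SameLine p d k : d != 0 -> N p = 1 -> N (p - d) = 1 ->
  N (p + k *: d) = 1 -> N (p + k *: d - d) = 1 -> k = 0.
Proof.
move=> dn0 h1 h2 h3 h4.
have [kneg|kpos|//] := ltgtP k 0.
- set mu := 1 / (1 - k).
  have E : p + k *: d = (1 - mu) *: (p + k *: d - d) + mu *: p by rewrite /mu; vec.
  have qr : p + k *: d - d != p.
    apply: (@neqc _ _ d (k - 1)) => //; first by apply/eqP; lra.
    by vec.
  have hmu : 0 < mu < 1.
    by rewrite /mu; apply/andP; split; [apply: divr_gt0; lra | rewrite ltr_pdivrMr; lra].
  by have := L1 mu _ _ h4 h1 qr hmu; rewrite -E h3 ltxx.
- set mu := 1 / (1 + k).
  have E : p = (1 - mu) *: (p - d) + mu *: (p + k *: d) by rewrite /mu; vec.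
  have qr : p - d != p + k *: d.
    apply: (@neqc _ _ d (-1 - k)) => //; first by apply/eqP; lra.
    by vec.
  have hmu : 0 < mu < 1.
    by rewrite /mu; apply/andP; split; [apply: divr_gt0; lra | rewrite ltr_pdivrMr; lra].
  by have := L1 mu _ _ h2 h3 qr hmu; rewrite -E h1 ltxx.
Qed.

Lemma LineLemma u d k : N u = 1 -> N (u - d) = 1 -> N (u + k *: d) < 1 ->
  N (u + k *: d - d) < 1 -> False.
Proof.
move=> h1 h2 h3 h4.
have [k1|k1] := lerP 1 k.
  have E : u = (1 - 1/k) *: (u - d) + (1 - (1 - 1/k)) *: (u + k *: d - d)
    by vec.
  have hl : 0 <= 1 - 1/k < 1.
    apply/andP; split; last by rewrite ltrBlDr ltrDl divr_gt0 //; lra.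
    by rewrite subr_ge0 ler_pdivrMr; lra.
  have := L0 (1 - 1/k) (u - d) (u + k *: d - d) (eq_ler h2) h4 hl.
  by rewrite -E h1 ltxx.
have [k0|k0] := lerP 0 k.
  have E : u = k *: (u + k *: d - d) + (1 - k) *: (u + k *: d) by vec.
  have := L0 k (u + k *: d - d) (u + k *: d) (ltW h4) h3.
  by rewrite -E h1 ltxx k0 k1 => /(_ isT).
have [km|km] := lerP (-1) k.
  have E : u - d = (1 + k) *: (u + k *: d - d) + (1 - (1 + k)) *: (u + k *: d) by vec.
  have hl : 0 <= 1 + k < 1 by apply/andP; split; lra.
  have := L0 (1 + k) (u + k *: d - d) (u + k *: d) (ltW h4) h3 hl.
  by rewrite -E h2 ltxx.
have E : u - d = (1 + 1/k) *: u + (1 - (1 + 1/k)) *: (u + k *: d) by vec.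
have h5 : -1 < 1 / k by rewrite ltr_ndivlMr; lra.
have h6 : 1 / k < 0 by rewrite ltr_ndivrMr; lra.
have hl : 0 <= 1 + 1/k < 1 by apply/andP; split; lra.
have := L0 (1 + 1/k) u (u + k *: d) (eq_ler h1) h3 hl.
by rewrite -E h2 ltxx.
Qed.

Definition chord (p d : 'rV[R]_2) := N p = 1 /\ N (p - d) = 1.

Lemma Middle p1 p2 p3 d : d != 0 -> chord p1 d -> chord p2 d -> chord p3 d ->
  det2 p1 d < det2 p2 d -> det2 p2 d < det2 p3 d -> False.
Proof.
move=> dn0 [a1 b1] [a2 b2] [a3 b3] l12 l23.
set mu := (det2 p2 d - det2 p1 d) / (det2 p3 d - det2 p1 d).
have hmu : 0 < mu < 1.
  apply/andP; split; first by apply: divr_gt0; lra.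
  by rewrite ltr_pdivrMr; lra.
have n13 : p1 != p3 by apply/eqP => E; move: l12 l23; rewrite E; lra.
have n13' : p1 - d != p3 - d.
  by apply/eqP => E; move/eqP: n13; apply; rewrite -(subrK d p1) E subrK.
set q := (1 - mu) *: p1 + mu *: p3.
have hq : N q < 1 by apply: L1.
have hqd : N (q - d) < 1.
  have -> : q - d = (1 - mu) *: (p1 - d) + mu *: (p3 - d) by rewrite /q; vec.
  by apply: L1.
have [k hk] : exists k, q - p2 = k *: d.
  apply: ker => //; move: hmu; rewrite /q /det2 /mu /det2 !mxE => _.
  rewrite /det2 in l12 l23; field; lra.
have qE : q = p2 + k *: d by rewrite -hk addrC subrK.
by apply: (LineLemma p2 d k a2 b2); rewrite -qE.
Qed.

Lemma Distinct3 p1 p2 p3 d : d != 0 -> chord p1 d -> chord p2 d -> chord p3 d ->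
  det2 p1 d != det2 p2 d -> det2 p2 d != det2 p3 d -> det2 p1 d != det2 p3 d -> False.
Proof.
move=> dn0 c1 c2 c3.
case: (ltgtP (det2 p1 d) (det2 p2 d)) => // h12 _;
case: (ltgtP (det2 p2 d) (det2 p3 d)) => // h23 _;
case: (ltgtP (det2 p1 d) (det2 p3 d)) => // h13 _;
  first [ exact: (Middle p1 p2 p3 d) | exact: (Middle p1 p3 p2 d)
        | exact: (Middle p3 p1 p2 d) | exact: (Middle p2 p1 p3 d)
        | exact: (Middle p2 p3 p1 d) | exact: (Middle p3 p2 p1 d) | lra ].
Qed.

Lemma Uniq x x' y y' : N x = 1 -> N x' = 1 -> N y = 1 -> N y' = 1 ->
  x + x' = y + y' -> x + x' != 0 ->
  (y = x /\ y' = x') \/ (y = x' /\ y' = x).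
Proof.
move=> nx nx' ny ny' hs hz.
have ex' : x' = y + y' - x by rewrite -hs addrC addKr.
have [xy|xy] := eqVneq x y.
  by left; split => //; move: ex'; rewrite xy addrC addKr.
set d := x - y.
have dn0 : d != 0 by rewrite subr_eq0.
have c1 : chord x d by split => //; have -> : x - d = y by rewrite /d; vec.
have c2 : chord y' d by split => //; have -> : y' - d = x' by rewrite ex' /d; vec.
have c3 : chord (- x') d.
  split; first by rewrite NN.
  have -> : - x' - d = - y' by rewrite ex' /d; vec.
  by rewrite NN.
have c4 : chord (- y) d.
  split; first by rewrite NN.
  have -> : - y - d = - x by rewrite /d; vec.
  by rewrite NN.
have e3 : det2 (- x') d = - det2 y' d by rewrite /det2 /d ex' !mxE; ring.
have e4 : det2 (- y) d = - det2 x d by rewrite /det2 /d !mxE; ring.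
have [e12|n12] := eqVneq (det2 x d) (det2 y' d).
  have [k hk] : exists k, y' - x = k *: d.
    by apply: ker => //; move: e12; rewrite /det2 !mxE => e12; lra.
  have yE : y' = x + k *: d by rewrite -hk addrC subrK.
  have k0 : k = 0.
    apply: (SameLine x d k dn0) => //; first by case: c1.
      by rewrite -yE.
    by rewrite -yE; case: c2.
  move: yE; rewrite k0 scale0r addr0 => yE.
  right; split => //; move: hs; rewrite yE addrC => /addIr.
  by [].
have [e13|n13] := eqVneq (det2 x d) (det2 (- x') d).
  have [k hk] : exists k, - x' - x = k *: d.
    by apply: ker => //; move: e13; rewrite /det2 !mxE => e13; lra.
  have yE : - x' = x + k *: d by rewrite -hk addrC subrK.
  have k0 : k = 0.
    apply: (SameLine x d k dn0) => //; first by case: c1.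
      by rewrite -yE; case: c3.
    by rewrite -yE; case: c3.
  move: yE; rewrite k0 scale0r addr0 => yE.
  by move: hz; rewrite -yE addNr eqxx.
exfalso.
have [h10|h10] := eqVneq (det2 x d) 0.
  apply: (Distinct3 x y' (- x') d) => //.
  rewrite e3; apply/eqP => h; move/eqP: n12; apply; lra.
apply: (Distinct3 x y' (- y) d) => //.
  rewrite e4; apply/eqP => h; move/eqP: n13; apply; rewrite e3; lra.
rewrite e4; apply/eqP => h; move/eqP: h10; apply; lra.
Qed.
Lemma Nlip p q : `|N p - N q| <= N (p - q).
Proof.
rewrite ler_norml; apply/andP; split.
  have := Ntri (q - p) p; rewrite subrK -opprB NN; lra.
have := Ntri (p - q) q; rewrite subrK; lra.
Qed.

Lemma contN (a b : R -> R) u v : continuous a -> continuous b ->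
  continuous (fun s => N (a s *: u + b s *: v)).
Proof.
move=> ca cb t; apply/cvgrPdist_lt => e e0.
set C := N u + N v + 1.
have C0 : 0 < C by have := Nge0 u; have := Nge0 v; rewrite /C; lra.
have eC : 0 < e / C by apply: divr_gt0.
move/cvgrPdist_lt: (ca t) => /(_ _ eC) ha.
move/cvgrPdist_lt: (cb t) => /(_ _ eC) hb.
near=> s.
have hsa : `|a t - a s| < e / C by near: s.
have hsb : `|b t - b s| < e / C by near: s.
apply: le_lt_trans (Nlip _ _) _.
have -> : a t *: u + b t *: v - (a s *: u + b s *: v)
   = (a t - a s) *: u + (b t - b s) *: v.
  by rewrite !scalerBl; rewrite opprD addrACA.
apply: le_lt_trans (Ntri _ _) _; rewrite !NZ.
have := Nge0 u; have := Nge0 v => gu gv.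
have : `|a t - a s| * N u + `|b t - b s| * N v <= e / C * (N u + N v).
  by rewrite mulrDr; apply: lerD; apply: ler_wpM2r => //; apply: ltW.
have : e / C * (N u + N v) < e.
  by rewrite mulrAC ltr_pdivrMr // ltr_pM2l //; rewrite /C; lra.
lra.
Unshelve. all: by end_near.
Qed.

Lemma NzLt1 z : in_int_ball N z -> z != 0 -> 0 < N z < 1.
Proof.
move=> [e e0 he] zn0.
have nz0 : 0 < N z.
  rewrite lt_def Nge0 andbT; apply/eqP => h; move/eqP: zn0; apply; exact: Neq0.
apply/andP; split => //.
set t := e / (2 * N z).
have t0 : 0 < t by rewrite /t divr_gt0 // mulr_gt0.
have := he ((1 + t) *: z).
have -> : (1 + t) *: z - z = t *: z by rewrite scalerDl scale1r addrAC subrr add0r.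
rewrite !NZ (ger0_norm (ltW t0)) ger0_norm; last lra.
have -> : t * N z = e / 2 by rewrite /t; field; lra.
move=> /(_ ltac:(lra)) h.
have : 0 < t * N z by apply: mulr_gt0.
nra.
Qed.


Lemma contPoly (c0 c1 c2 : R) : continuous (fun s : R => c0 + c1 * s + c2 * s ^+ 2).
Proof.
move=> t; apply: cvgD; first apply: cvgD.
- exact: cvg_cst.
- by apply: cvgM; [exact: cvg_cst | exact: cvg_id].
- by apply: cvgM; [exact: cvg_cst | rewrite expr2; apply: cvgM; exact: cvg_id].
Qed.

Lemma Exist z : 0 < N z < 1 -> z != 0 -> exists x, N x = 1 /\ N (2 *: z - x) = 1.
Proof.
move=> /andP[nz0 nz1] zn0.
set q : 'rV[R]_2 := \row_(i < 2) (if val i == 0%N then - z 0 1 else z 0 0).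
have q0 : q 0 0 = - z 0 1 by rewrite mxE.
have q1 : q 0 1 = z 0 0 by rewrite mxE.
set w := fun s : R => (1 + (-2) * s + 0 * s ^+ 2) *: z + (0 + 1 * s + (-1) * s ^+ 2) *: q.
have S0 : 0 < z 0 0 ^+ 2 + z 0 1 ^+ 2.
  rewrite lt_def addr_ge0 ?sqr_ge0 // andbT; apply/negP => /eqP h.
  have h0 : z 0 0 = 0 by apply/eqP; rewrite -sqrf_eq0 eq_le sqr_ge0 andbT; nra.
  have h1 : z 0 1 = 0 by apply/eqP; rewrite -sqrf_eq0 eq_le sqr_ge0 andbT; nra.
  by move/eqP: zn0; apply; apply: rowV2; rewrite !mxE ?h0 ?h1.
have wn0 : forall s, w s != 0.
  move=> s; apply/eqP => /rowP H.
  have E0 := H 0; have E1 := H 1; rewrite !mxE /= in E0 E1.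
  have A1 : (1 - 2 * s) * (z 0 0 ^+ 2 + z 0 1 ^+ 2) = 0.
    have -> : (1 - 2 * s) * (z 0 0 ^+ 2 + z 0 1 ^+ 2) = z 0 0 * ((1 + -2 * s + 0 * s ^+ 2) * z 0 0 + (0 + 1 * s + -1 * s ^+ 2) * - z 0 1) + z 0 1 * ((1 + -2 * s + 0 * s ^+ 2) * z 0 1 + (0 + 1 * s + -1 * s ^+ 2) * z 0 0) by ring.
    by rewrite E0 E1; ring.
  have A2 : (s - s ^+ 2) * (z 0 0 ^+ 2 + z 0 1 ^+ 2) = 0.
    have -> : (s - s ^+ 2) * (z 0 0 ^+ 2 + z 0 1 ^+ 2) = - z 0 1 * ((1 + -2 * s + 0 * s ^+ 2) * z 0 0 + (0 + 1 * s + -1 * s ^+ 2) * - z 0 1) + z 0 0 * ((1 + -2 * s + 0 * s ^+ 2) * z 0 1 + (0 + 1 * s + -1 * s ^+ 2) * z 0 0) by ring.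
    by rewrite E0 E1; ring.
  move/eqP: A1; rewrite mulf_eq0 (gt_eqF S0) orbF => /eqP A1.
  move/eqP: A2; rewrite mulf_eq0 (gt_eqF S0) orbF => /eqP A2.
  have hs : s = 2^-1 by rewrite -[s]mul1r -(@divff _ 2) // mulrAC; lra.
  by move: A2; rewrite hs; lra.
set n := fun s => N (w s).
have npos : forall s, 0 < n s.
  move=> s; rewrite lt_def Nge0 andbT; apply/eqP => h.
  by move/eqP: (wn0 s); apply; apply: Neq0.
have cn : continuous n by apply: contN; apply: contPoly.
set h := fun s => N ((2 - (1 + (-2) * s + 0 * s ^+ 2) * (n s)^-1) *: z
                     + (- (0 + 1 * s + (-1) * s ^+ 2) * (n s)^-1) *: q).
have ch : continuous h.
  apply: contN => t.
  - apply: cvgB; first exact: cvg_cst.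
    apply: cvgM; first exact: contPoly.
    by apply: cvgV; [rewrite gt_eqF | exact: cn].
  - apply: cvgM; first by apply: cvgN; exact: contPoly.
    by apply: cvgV; [rewrite gt_eqF | exact: cn].
have hE : forall s, h s = N (2 *: z - (n s)^-1 *: w s).
  move=> s; rewrite /h /w; congr (N _); apply: rowV2; rewrite !mxE /=;
  by field; rewrite gt_eqF.
have w0 : w 0 = z by rewrite /w; apply: rowV2; rewrite !mxE /=; ring.
have w1 : w 1 = - z by rewrite /w; apply: rowV2; rewrite !mxE /=; ring.
have nzn : N z != 0 by rewrite gt_eqF.
have h0 : h 0 < 1.
  rewrite hE /n w0.
  have -> : 2 *: z - (N z)^-1 *: z = (2 - (N z)^-1) *: z.
    by apply: rowV2; rewrite !mxE /=; ring.
  rewrite NZ -{2}(ger0_norm (ltW nz0)) -normrM.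
  have -> : (2 - (N z)^-1) * N z = 2 * N z - 1 by field.
  rewrite ltr_norml; apply/andP; split; lra.
have h1 : 1 < h 1.
  rewrite hE /n w1 NN.
  have -> : 2 *: z - (N z)^-1 *: - z = (2 + (N z)^-1) *: z.
    by apply: rowV2; rewrite !mxE /=; ring.
  rewrite NZ ger0_norm; last by rewrite addr_ge0 // invr_ge0 ltW.
  have -> : (2 + (N z)^-1) * N z = 2 * N z + 1 by field.
  lra.
have [c _ hc] : exists2 c, c \in `[0, 1] & h c = 1.
  apply: IVT => //; first exact: continuous_subspaceT.
  rewrite ge_min le_max; apply/andP; split; apply/orP; [left | right]; exact: ltW.
exists ((n c)^-1 *: w c); split; last by rewrite -hE.
rewrite NZ /n ger0_norm; last by rewrite invr_ge0 ltW // npos.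
by rewrite mulVf // gt_eqF // npos.
Qed.

End Alg.

Theorem lemma2p8 (R : realType) (N : 'rV[R]_2 -> R) :
  is_norm N -> strictly_convex N ->
  forall z : 'rV[R]_2, in_int_ball N z -> z != 0 ->
  exists x : 'rV[R]_2, exists x' : 'rV[R]_2,
    [/\ N x = 1, N x' = 1, z = 2^-1 *: (x + x') &
        forall y y' : 'rV[R]_2, N y = 1 -> N y' = 1 -> z = 2^-1 *: (y + y') ->
          (y = x /\ y' = x') \/ (y = x' /\ y' = x)].
Proof.
move=> hN hS z hz zn0.
have nz := @NzLt1 _ _ hN _ hz zn0.
have [x [nx nx']] := @Exist _ _ hN _ nz zn0.
have zE : z = 2^-1 *: (x + (2 *: z - x)).
  by rewrite addrC subrK scalerA mulVf ?scale1r // pnatr_eq0.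
exists x, (2 *: z - x); split => // y y' ny ny' zE'.
apply: (@Uniq _ _ hN hS) => //.
  by rewrite addrC subrK zE' scalerA divff ?scale1r // pnatr_eq0.
rewrite addrC subrK scaler_eq0 negb_or zn0 andbT pnatr_eq0 //.
Qed.
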